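(* Let $\mathcal N$ be a finite $k$-bounded Petri net ($k\ge1$) and $(\mathcal N^U,\lambda)$ an initial branching process of $\mathcal N$. Then every cut of $\mathcal N^U$ is finite.
   Context: A Petri net $(\mathcal P,\mathcal T,\mathcal F,\mathit{In})$ has disjoint places $\mathcal P$ and transitions $\mathcal T$, a flow relation $\mathcal F$ that is a multiset over $(\mathcal P\times\mathcal T)\cup(\mathcal T\times\mathcal P)$, and a finite multiset $\mathit{In}$ over $\mathcal P$; ${}^\bullet x(y)=\mathcal F(y,x)$, $x^\bullet(y)=\mathcal F(x,y)$, and every transition has finite nonempty pre- and postcondition. A marking is a finite multiset of places; $t$ is enabled in $M$ if ${}^\bullet t\subseteq M$, firing gives $M-{}^\bullet t+t^\bullet$; reachable markings are those obtained from $\mathit{In}$ by finitely many firings. The net is finite if it has finitely many places and transitions, and $k$-bounded if $M(p)\le k$ for every reachable marking $M$ and place $p$. For a map $f$ and a multiset $M$, $f[M](y)=\sum_{x:f(x)=y}M(x)$. Let $<$ be the transitive closure of $\{(x,y)\mid\mathcal F(x,y)>0\}$ and $\le$ its reflexive-transitive closure; nodes $x,y$ are in conflict if there is a place $p\ne x,y$ and distinct transitions $t_1,t_2\in p^\bullet$ with $t_1\le x$, $t_2\le y$; concurrent if neither causally related nor in conflict. An occurrence net is a Petri net in which pre- and postconditions of transitions are sets, every place has at most one incoming transition, $\mathit{In}=\{p\mid{}^\bullet p=\emptyset\}$, $\mathcal F^{-1}$ is well-founded, and no transition is in conflict with itself. A cut is a maximal set of pairwise concurrent places. A homomorphism from $\mathcal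 N_1$ to $\mathcal N_2$ is a map $\lambda$ sending places to places and transitions to transitions with $\lambda[{}^\bullet t]={}^\bullet\lambda(t)$ and $\lambda[t^\bullet]=\lambda(t)^\bullet$; it is initial if $\lambda[\mathit{In}_1]=\mathit{In}_2$. An initial branching process of $\mathcal N$ is a pair $(\mathcal N^U,\lambda)$ with $\mathcal N^U$ an occurrence net and $\lambda$ an initial homomorphism $\mathcal N^U\to\mathcal N$ such that ${}^\bullet t_1={}^\bullet t_2$ and $\lambda(t_1)=\lambda(t_2)$ imply $t_1=t_2$. *)

(* Defs.v *)
From Stdlib Require Import List Arith Relations.
Import ListNotations.


(** Raw data of a Petri net: places and transitions are two (hence disjoint)
    types; the flow relation is a multiset over (P x T) u (T x P), split into
    [pre p t = F(p,t)] and [post t p = F(t,p)]; [init] is the multiset In. *)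
Record PNet := {
  place : Type;
  trans : Type;
  pre   : place -> trans -> nat;
  post  : trans -> place -> nat;
  init  : place -> nat
}.

Definition finite_mset {X : Type} (M : X -> nat) : Prop :=
  exists l : list X, forall x, 0 < M x -> In x l.

Definition petri_net (N : PNet) : Prop :=
  finite_mset (init N) /\
  (forall t, finite_mset (fun p => pre N p t) /\ exists p, 0 < pre N p t) /\
  (forall t, finite_mset (fun p => post N t p) /\ exists p, 0 < post N t p).

Definition node (N : PNet) : Type := (place N + trans N)%type.

Definition flow (N : PNet) (x y : node N) : nat :=
  match x, y with
  | inl p, inr t => pre N p t
  | inr t, inl p => post N t p
  | _, _ => 0
  end.

Definition flowR (N : PNet) (x y : node N) : Prop := 0 < flow N x y.

Definition lt_node (N : PNet) : relation (node N) := clos_trans _ (flowR N).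
Definition le_node (N : PNet) : relation (node N) := clos_refl_trans _ (flowR N).

Definition conflict (N : PNet) (x y : node N) : Prop :=
  exists (p : place N) (t1 t2 : trans N),
    inl p <> x /\ inl p <> y /\ t1 <> t2 /\
    0 < pre N p t1 /\ 0 < pre N p t2 /\
    le_node N (inr t1) x /\ le_node N (inr t2) y.

Definition causally_related (N : PNet) (x y : node N) : Prop :=
  le_node N x y \/ le_node N y x.

Definition concurrent (N : PNet) (x y : node N) : Prop :=
  ~ causally_related N x y /\ ~ conflict N x y.

Definition enabled (N : PNet) (t : trans N) (M : place N -> nat) : Prop :=
  forall p, pre N p t <= M p.

Definition fire (N : PNet) (t : trans N) (M : place N -> nat) : place N -> nat :=
  fun p => M p - pre N p t + post N t p.

Inductive reachable (N : PNet) : (place N -> nat) -> Prop :=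
| reach_init : reachable N (init N)
| reach_fire : forall M t, reachable N M -> enabled N t M -> reachable N (fire N t M).

Definition finite_net (N : PNet) : Prop :=
  (exists lp : list (place N), forall p, In p lp) /\
  (exists lt : list (trans N), forall t, In t lt).

Definition k_bounded (k : nat) (N : PNet) : Prop :=
  forall M, reachable N M -> forall p, M p <= k.

Definition occurrence_net (N : PNet) : Prop :=
  (forall p t, pre N p t <= 1) /\
  (forall t p, post N t p <= 1) /\
  (forall p t1 t2, 0 < post N t1 p -> 0 < post N t2 p -> t1 = t2) /\
  (forall p, init N p <= 1 /\ (init N p = 1 <-> forall t, post N t p = 0)) /\
  well_founded (flowR N) /\
  (forall t : trans N, ~ conflict N (inr t) (inr t)).

Definition pairwise_concurrent (N : PNet) (C : place N -> Prop) : Prop :=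
  forall p q, C p -> C q -> p <> q -> concurrent N (inl p) (inl q).

Definition cut (N : PNet) (C : place N -> Prop) : Prop :=
  pairwise_concurrent N C /\
  forall D : place N -> Prop,
    (forall p, C p -> D p) -> pairwise_concurrent N D -> forall p, D p -> C p.

Definition finite_set {X : Type} (C : X -> Prop) : Prop :=
  exists l : list X, forall x, C x -> In x l.

Definition mset_sum_on {X : Type} (Q : X -> Prop) (M : X -> nat) (n : nat) : Prop :=
  exists l : list X, NoDup l /\ (forall x, In x l -> Q x) /\
    (forall x, Q x -> 0 < M x -> In x l) /\ n = list_sum (map M l).

Definition mset_image {X Y : Type} (f : X -> Y) (M : X -> nat) (N : Y -> nat) : Prop :=
  forall y, mset_sum_on (fun x => f x = y) M (N y).

Definition homomorphism (N1 N2 : PNet)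
  (lp : place N1 -> place N2) (lt : trans N1 -> trans N2) : Prop :=
  forall t, mset_image lp (fun p => pre N1 p t) (fun q => pre N2 q (lt t)) /\
            mset_image lp (fun p => post N1 t p) (fun q => post N2 (lt t) q).

Definition initial_homomorphism (N1 N2 : PNet)
  (lp : place N1 -> place N2) (lt : trans N1 -> trans N2) : Prop :=
  homomorphism N1 N2 lp lt /\ mset_image lp (init N1) (init N2).

Definition initial_branching_process (N NU : PNet)
  (lp : place NU -> place N) (lt : trans NU -> trans N) : Prop :=
  petri_net NU /\ occurrence_net NU /\ initial_homomorphism NU N lp lt /\
  (forall t1 t2, (forall p, pre NU p t1 = pre NU p t2) -> lt t1 = lt t2 -> t1 = t2).

(* Main.v *)
Require Import Defs.
From Stdlib Require Import List Arith Relations Lia ClassicalEpsilon Classical Wellfounded.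
Import ListNotations.

Lemma fin_mono {X} (F G : X -> Prop) : finite_set F -> (forall x, G x -> F x) -> finite_set G.
Proof. intros [l Hl] H. exists l. auto. Qed.

Lemma fin_union {A B} (l : list A) (F : A -> B -> Prop) :
  (forall a, In a l -> finite_set (F a)) -> finite_set (fun b => exists a, In a l /\ F a b).
Proof.
  induction l as [|a l IH]; intros H.
  - exists []. intros b [a [[] _]].
  - destruct (H a (or_introl eq_refl)) as [l1 H1].
    destruct IH as [l2 H2]. { intros; apply H; now right. }
    exists (l1 ++ l2). intros b [a' [[<-|Ha] Hb]]; apply in_or_app; [left|right]; eauto.
Qed.

Lemma bounded_finite {X} (Q : X -> Prop) k :
  (forall L, NoDup L -> (forall x, In x L -> Q x) -> length L <= k) -> finite_set Q.
Proof.
  intros H.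
  assert (G : forall m L, NoDup L -> (forall x, In x L -> Q x) -> k - length L <= m -> finite_set Q).
  { induction m; intros L HL HQ Hm;
    (destruct (classic (forall x, Q x -> In x L)) as [Hall|Hn]; [exists L; exact Hall|]);
    apply not_all_ex_not in Hn; destruct Hn as [x Hx];
    apply imply_to_and in Hx; destruct Hx as [Qx nI];
    assert (HN : NoDup (x :: L)) by (constructor; auto);
    assert (HQ' : forall y, In y (x::L) -> Q y) by (intros y [<-|Hy]; auto);
    pose proof (H _ HN HQ') as Hlen; simpl in Hlen.
    - lia.
    - apply (IHm (x::L)); auto. simpl; lia. }
  apply (G k []); simpl; auto. constructor. intros x []. lia.
Qed.

Lemma filter_sum_le {X} (M : X -> nat) l :
  length (filter (fun x => 0 <? M x) l) <= list_sum (map M l).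
Proof.
  induction l; simpl; auto. destruct (0 <? M a) eqn:E; simpl.
  - apply Nat.ltb_lt in E. lia.
  - lia.
Qed.

Lemma filter_sum_eq {X} (M : X -> nat) l : (forall x, In x l -> M x <= 1) ->
  length (filter (fun x => 0 <? M x) l) = list_sum (map M l).
Proof.
  induction l; simpl; intros H; auto.
  assert (IH' := IHl (fun x Hx => H x (or_intror Hx))).
  assert (Ha := H a (or_introl eq_refl)).
  destruct (0 <? M a) eqn:E; simpl.
  - apply Nat.ltb_lt in E. lia.
  - apply Nat.ltb_ge in E. lia.
Qed.

Lemma sum_bound {X} (Q : X -> Prop) (M : X -> nat) n Y :
  mset_sum_on Q M n -> NoDup Y -> (forall y, In y Y -> Q y /\ 0 < M y) -> length Y <= n.
Proof.
  intros [l [Hl [HlQ [Hcov ->]]]] HY HYQ.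
  eapply Nat.le_trans; [|apply filter_sum_le].
  apply NoDup_incl_length; auto.
  intros y Hy. apply filter_In. destruct (HYQ y Hy). split; auto. now apply Nat.ltb_lt.
Qed.

Lemma filter_partition_len {X} (f : X -> nat) l :
  length l = length (filter (fun y => 0 <? f y) l) + length (filter (fun y => f y =? 0) l).
Proof.
  induction l; simpl; auto.
  destruct (f a) eqn:E; simpl; lia.
Qed.

Lemma maximal_in_list {A} (R : A -> A -> Prop) (P : A -> Prop)
  (Htr : forall x y z, R x y -> R y z -> R x z) (Hirr : forall x, ~ R x x) :
  forall l, (exists a, In a l /\ P a) ->
  exists m, In m l /\ P m /\ forall y, In y l -> P y -> ~ R m y.
Proof.
  induction l as [|a l IH]; intros [a0 [Ha0 Pa0]]; [destruct Ha0|].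
  destruct (classic (exists b, In b l /\ P b)) as [Hb|Hb].
  - destruct (IH Hb) as [m [Hm [Pm Hmax]]].
    destruct (classic (P a /\ R m a)) as [[Pa Rma]|Hn].
    + exists a. split; [now left|split; auto].
      intros y [<-|Hy] Py Ray; [exact (Hirr _ Ray)|].
      exact (Hmax y Hy Py (Htr _ _ _ Rma Ray)).
    + exists m. split; [now right|split; auto].
      intros y [<-|Hy] Py Rmy; [apply Hn; auto|exact (Hmax y Hy Py Rmy)].
  - assert (a0 = a) as ->.
    { destruct Ha0 as [->|Ha0]; auto. exfalso; apply Hb; eauto. }
    exists a. split; [now left|split; auto].
    intros y [<-|Hy] Py Ray; [exact (Hirr _ Ray)|apply Hb; eauto].
Qed.
Import ListNotations.

Lemma lt_irr (NU : PNet) (Hwf : well_founded (flowR NU)) x : ~ lt_node NU x x.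
Proof.
  pose proof (wf_clos_trans _ _ Hwf x) as Ha. unfold lt_node.
  induction Ha as [x _ IH]. intros H. exact (IH x H H).
Qed.

Lemma le_flow_lt (NU : PNet) x y z : le_node NU x y -> flowR NU y z -> lt_node NU x z.
Proof. intros H1 H2. eapply clos_rt_t; [exact H1|now apply t_step]. Qed.

Lemma flow_le_lt (NU : PNet) x y z : flowR NU x y -> le_node NU y z -> lt_node NU x z.
Proof.
  intros H1 H2. apply clos_rt_rtn1 in H2. induction H2.
  - now apply t_step.
  - eapply t_trans; [exact IHclos_refl_trans_n1|now apply t_step].
Qed.

Lemma lt_le (NU : PNet) x y : lt_node NU x y -> le_node NU x y.
Proof. apply clos_t_clos_rt. Qed.

Lemma le_tr (NU : PNet) x y z : le_node NU x y -> le_node NU y z -> le_node NU x z.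
Proof. apply rt_trans. Qed.

Lemma fl_le (NU : PNet) x y : flowR NU x y -> le_node NU x y.
Proof. apply rt_step. Qed.

Lemma dec_t_inl (NU : PNet) t x : le_node NU (inr t) (inl x) ->
  exists p, 0 < post NU t p /\ le_node NU (inl p) (inl x).
Proof.
  intros H. apply clos_rt_rt1n in H. inversion H as [|y b Hf Hr]; subst.
  destruct y as [p|t'].
  - exists p. split; [exact Hf|now apply clos_rt1n_rt].
  - unfold flowR in Hf; simpl in Hf; lia.
Qed.

Lemma dec_inl_inl (NU : PNet) z x : le_node NU (inl z) (inl x) -> z <> x ->
  exists t1, 0 < pre NU z t1 /\ le_node NU (inr t1) (inl x).
Proof.
  intros H Hne. apply clos_rt_rt1n in H. inversion H as [|y b Hf Hr]; subst; [congruence|].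
  destruct y as [p|t'].
  - unfold flowR in Hf; simpl in Hf; lia.
  - exists t'. split; [exact Hf|now apply clos_rt1n_rt].
Qed.

Lemma dec_last_inr (NU : PNet) t' t : le_node NU (inr t') (inr t) ->
  t' = t \/ exists p, 0 < pre NU p t /\ le_node NU (inr t') (inl p).
Proof.
  intros H. apply clos_rt_rtn1 in H. inversion H as [|y b Hf Hr]; subst; [now left|].
  right. destruct y as [p|t''].
  - exists p. split; [exact Hf|now apply clos_rtn1_rt].
  - unfold flowR in Hf; simpl in Hf; lia.
Qed.

Lemma dec_last_inl (NU : PNet) t' p : le_node NU (inr t') (inl p) ->
  exists t, 0 < post NU t p /\ le_node NU (inr t') (inr t).
Proof.
  intros H. apply clos_rt_rtn1 in H. inversion H as [|y b Hf Hr]; subst.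
  destruct y as [p'|t''].
  - unfold flowR in Hf; simpl in Hf; lia.
  - exists t''. split; [exact Hf|now apply clos_rtn1_rt].
Qed.

Lemma past_finite (NU : PNet) (HpnU : petri_net NU)
  (Huniq : forall p t1 t2, 0 < post NU t1 p -> 0 < post NU t2 p -> t1 = t2)
  (Hwf : well_founded (flowR NU)) :
  forall x, finite_set (fun t => le_node NU (inr t) x).
Proof.
  intros x. induction x as [x IH] using (well_founded_ind Hwf).
  destruct x as [p|t].
  - destruct (classic (exists t, 0 < post NU t p)) as [[t0 Ht0]|Hn].
    + eapply fin_mono; [apply (IH (inr t0)); exact Ht0|].
      intros t' Ht'. destruct (dec_last_inl _ _ _ Ht') as [t [Ht Hle]].
      rewrite (Huniq _ _ _ Ht Ht0) in Hle. exact Hle.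
    + exists []. intros t' Ht'. destruct (dec_last_inl _ _ _ Ht') as [t [Ht _]]. exfalso; apply Hn; eauto.
  - destruct HpnU as [_ [Hpre _]]. destruct (Hpre t) as [[lpre Hlpre] _].
    destruct (fin_union lpre (fun p t' => 0 < pre NU p t /\ le_node NU (inr t') (inl p))) as [l Hl].
    { intros p _. destruct (Nat.lt_ge_cases 0 (pre NU p t)) as [Hp|Hp].
      - destruct (IH (inl p) Hp) as [l Hl]. exists l. intros t' [_ H]; auto.
      - exists []. intros t' [H _]; lia. }
    exists (t :: l). intros t' Ht'. destruct (dec_last_inr _ _ _ Ht') as [->|[p [Hp Hle]]].
    + now left.
    + right. apply Hl. exists p. split; auto.
Qed.

Definition pastX (NU : PNet) (X : list (place NU)) t :=
  exists x, In x X /\ le_node NU (inr t) (inl x).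
Definition pw (NU : PNet) (X : list (place NU)) :=
  forall x y, In x X -> In y X -> x <> y -> concurrent NU (inl x) (inl y).
Definition maxT (NU : PNet) (X : list (place NU)) t :=
  pastX NU X t /\ forall x, In x X -> le_node NU (inr t) (inl x) -> 0 < post NU t x.

Lemma conc_sym NU x y : concurrent NU x y -> concurrent NU y x.
Proof.
  intros [H1 H2]. split.
  - intros [H|H]; apply H1; [right|left]; exact H.
  - intros [p [t1 [t2 [A [B [C [D [E [F G]]]]]]]]]. apply H2.
    exists p, t2, t1. repeat split; auto.
Qed.

Lemma notleA NU (Hwf : well_founded (flowR NU)) (Hnsc : forall t : trans NU, ~ conflict NU (inr t) (inr t))
  t p1 p2 : 0 < pre NU p1 t -> 0 < pre NU p2 t -> p1 <> p2 -> ~ le_node NU (inl p1) (inl p2).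
Proof.
  intros Hp1 Hp2 Hne Hle. destruct (dec_inl_inl _ _ _ Hle Hne) as [t1 [H1 H2]].
  destruct (classic (t1 = t)) as [->|Hne'].
  - apply (lt_irr _ Hwf (inr t)). apply le_flow_lt with (inl p2); auto.
  - apply (Hnsc t). exists p1, t1, t. repeat split; try discriminate; auto.
    + eapply le_tr; [exact H2|apply fl_le; exact Hp2].
    + apply rt_refl.
Qed.

Lemma concA NU (Hwf : well_founded (flowR NU)) (Hnsc : forall t : trans NU, ~ conflict NU (inr t) (inr t))
  t p1 p2 : 0 < pre NU p1 t -> 0 < pre NU p2 t -> p1 <> p2 -> concurrent NU (inl p1) (inl p2).
Proof.
  intros Hp1 Hp2 Hne. split.
  - intros [H|H]; [exact (notleA NU Hwf Hnsc t p1 p2 Hp1 Hp2 Hne H) | exact (notleA NU Hwf Hnsc t p2 p1 Hp2 Hp1 (fun E => Hne (eq_sym E)) H)].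
  - intros [p'' [ta [tb [H1 [H2 [H3 [H4 [H5 [H6 H7]]]]]]]]].
    apply (Hnsc t). exists p'', ta, tb. repeat split; try discriminate; auto.
    + eapply le_tr; [exact H6|apply fl_le; exact Hp1].
    + eapply le_tr; [exact H7|apply fl_le; exact Hp2].
Qed.

Lemma concB NU (Hwf : well_founded (flowR NU)) X t (Hpw : pw NU X) (Hmax : maxT NU X t)
  z x : 0 < pre NU z t -> In x X -> post NU t x = 0 -> z <> x -> concurrent NU (inl z) (inl x).
Proof.
  intros Hz Hx Hpx Hne. destruct Hmax as [[x0 [Hx0 Hle0]] Hmx].
  pose proof (Hmx x0 Hx0 Hle0) as Hp0.
  assert (Hx0x : x0 <> x) by (intros ->; lia).
  destruct (Hpw x0 x Hx0 Hx Hx0x) as [Hc1 Hc2].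
  assert (Hzx0 : z <> x0).
  { intros ->. apply (lt_irr _ Hwf (inl x0)). apply flow_le_lt with (inr t); [exact Hz|apply fl_le; exact Hp0]. }
  split.
  - intros [Hzx|Hxz].
    + destruct (dec_inl_inl _ _ _ Hzx Hne) as [t1 [H1 H2]].
      destruct (classic (t1 = t)) as [->|Hne'].
      * pose proof (Hmx x Hx H2). lia.
      * apply Hc2. exists z, t, t1.
        refine (conj _ (conj _ (conj (fun E => Hne' (eq_sym E)) (conj Hz (conj H1 (conj _ H2)))))).
        -- intros E; injection E; auto.
        -- intros E; injection E; auto.
        -- apply fl_le; exact Hp0.
    + destruct (Hpw x x0 Hx Hx0 (fun E => Hx0x (eq_sym E))) as [Hc _]. apply Hc. left.
      eapply le_tr; [exact Hxz|]. apply le_tr with (inr t); apply fl_le; [exact Hz|exact Hp0].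
  - intros [p'' [ta [tb [H1 [H2 [H3 [H4 [H5 [H6 H7]]]]]]]]].
    assert (Hta : le_node NU (inr ta) (inl x0)).
    { eapply le_tr; [exact H6|]. apply le_tr with (inr t); apply fl_le; [exact Hz|exact Hp0]. }
    apply Hc2. exists p'', ta, tb. repeat split; auto.
    intros E; injection E as ->. apply (lt_irr _ Hwf (inl x0)).
    apply flow_le_lt with (inr ta); [exact H4|exact Hta].
Qed.

Definition Xn NU (X : list (place NU)) t (lpre : list (place NU)) :=
  filter (fun x => post NU t x =? 0) X ++ filter (fun p => 0 <? pre NU p t) lpre.

Lemma In_Xn NU X t lpre y : In y (Xn NU X t lpre) -> (In y X /\ post NU t y = 0) \/ 0 < pre NU y t.
Proof.
  unfold Xn. intros H. apply in_app_or in H as [H|H]; apply filter_In in H as [H1 H2].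
  - left. split; auto. now apply Nat.eqb_eq.
  - right. now apply Nat.ltb_lt.
Qed.

Lemma In_Xn1 NU X t lpre y : In y X -> post NU t y = 0 -> In y (Xn NU X t lpre).
Proof. intros. unfold Xn. apply in_or_app. left. apply filter_In. split; auto. now apply Nat.eqb_eq. Qed.

Lemma In_Xn2 NU X t lpre y : (forall p, 0 < pre NU p t -> In p lpre) -> 0 < pre NU y t -> In y (Xn NU X t lpre).
Proof. intros. unfold Xn. apply in_or_app. right. apply filter_In. split; auto. now apply Nat.ltb_lt. Qed.

Lemma pw_Xn NU (Hwf : well_founded (flowR NU)) (Hnsc : forall t : trans NU, ~ conflict NU (inr t) (inr t))
  X t lpre (Hpw : pw NU X) (Hmax : maxT NU X t) : pw NU (Xn NU X t lpre).
Proof.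
  intros y1 y2 H1 H2 Hne.
  destruct (In_Xn _ _ _ _ _ H1) as [[A1 B1]|C1]; destruct (In_Xn _ _ _ _ _ H2) as [[A2 B2]|C2].
  - auto.
  - apply conc_sym. eapply concB; eauto.
  - eapply concB; eauto.
  - eapply concA; eauto.
Qed.

Lemma past_Xn NU (Hwf : well_founded (flowR NU)) X t lpre (Hmax : maxT NU X t) t' :
  pastX NU (Xn NU X t lpre) t' -> pastX NU X t' /\ t' <> t.
Proof.
  intros [y [Hy Hle]]. destruct Hmax as [[x0 [Hx0 Hle0]] Hmx].
  pose proof (Hmx x0 Hx0 Hle0) as Hp0.
  destruct (In_Xn _ _ _ _ _ Hy) as [[A B]|C].
  - split; [exists y; auto|]. intros ->. pose proof (Hmx y A Hle). lia.
  - split.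
    + exists x0. split; auto. eapply le_tr; [exact Hle|]. apply le_tr with (inr t); apply fl_le; [exact C|exact Hp0].
    + intros ->. apply (lt_irr _ Hwf (inr t)). apply le_flow_lt with (inl y); auto.
Qed.

Definition covers (N NU : PNet) (lp : place NU -> place N) (M : place N -> nat) (X : list (place NU)) :=
  forall q Y, NoDup Y -> (forall y, In y Y -> In y X /\ lp y = q) -> length Y <= M q.

Lemma step_lemma (N NU : PNet) lp ltr (Hhom : homomorphism NU N lp ltr)
  (Hpre1 : forall p t, pre NU p t <= 1)
  X t lpre (Hlpre : forall p, 0 < pre NU p t -> In p lpre)
  (Hpw : pw NU X) (Hmax : maxT NU X t) M :
  covers N NU lp M (Xn NU X t lpre) ->
  enabled N (ltr t) M /\ covers N NU lp (fire N (ltr t) M) X.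
Proof.
  intros Hcov.
  assert (HZ : forall q, exists Z, NoDup Z /\ length Z = pre N q (ltr t) /\
             forall z, In z Z -> lp z = q /\ 0 < pre NU z t).
  { intros q. destruct (proj1 (Hhom t) q) as [l [Hl [HlQ [Hc Heq]]]].
    exists (filter (fun p => 0 <? pre NU p t) l). split; [now apply NoDup_filter|split].
    - rewrite Heq. apply filter_sum_eq. auto.
    - intros z Hz. apply filter_In in Hz as [A B]. split; auto. now apply Nat.ltb_lt. }
  split.
  - intros q. destruct (HZ q) as [Z [HZn [HZl HZi]]]. rewrite <- HZl.
    apply Hcov; auto. intros z Hz. destruct (HZi z Hz). split; auto. apply In_Xn2; auto.
  - intros q Y HY HYX. unfold fire. destruct (HZ q) as [Z [HZn [HZl HZi]]].
    rewrite (filter_partition_len (fun y => post NU t y) Y).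
    assert (H1 : length (filter (fun y => 0 <? post NU t y) Y) <= post N (ltr t) q).
    { eapply sum_bound; [exact (proj2 (Hhom t) q)|now apply NoDup_filter|].
      intros y Hy. apply filter_In in Hy as [A B]. split; [apply HYX; auto|now apply Nat.ltb_lt]. }
    assert (H2 : length (filter (fun y => post NU t y =? 0) Y ++ Z) <= M q).
    { apply Hcov.
      - apply NoDup_app; [now apply NoDup_filter|auto|].
        intros y Hy Hz. apply filter_In in Hy as [A B]. apply Nat.eqb_eq in B.
        destruct (HZi y Hz) as [_ Hp]. destruct (HYX y A) as [Hy _].
        destruct Hmax as [[x0 [Hx0 Hle0]] Hmx]. pose proof (Hmx x0 Hx0 Hle0) as Hp0.
        assert (Hne : y <> x0) by (intros ->; lia).
        destruct (Hpw y x0 Hy Hx0 Hne) as [Hc _]. apply Hc. left.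
        apply le_tr with (inr t); apply fl_le; [exact Hp|exact Hp0].
      - intros y Hy. apply in_app_or in Hy as [Hy|Hy].
        + apply filter_In in Hy as [A B]. apply Nat.eqb_eq in B. destruct (HYX y A).
          split; auto. apply In_Xn1; auto.
        + destruct (HZi y Hy). split; auto. apply In_Xn2; auto. }
    rewrite length_app in H2. lia.
Qed.

Lemma main_ind (N NU : PNet) lp ltr (HpnU : petri_net NU) (Hocc : occurrence_net NU)
  (Hhom : homomorphism NU N lp ltr) (Hinit : mset_image lp (init NU) (init N)) :
  forall n X l, length l <= n -> (forall t, pastX NU X t -> In t l) -> pw NU X ->
  exists M, reachable N M /\ covers N NU lp M X.
Proof.
  destruct Hocc as [Hpre1 [Hpost1 [Huniq [Hinit1 [Hwf Hnsc]]]]].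
  assert (Base : forall X, ~ (exists t, pastX NU X t) -> exists M, reachable N M /\ covers N NU lp M X).
  { intros X Hn. exists (init N). split; [constructor|].
    intros q Y HY HYX. eapply sum_bound; [exact (Hinit q)|exact HY|].
    intros y Hy. destruct (HYX y Hy) as [A B]. split; auto.
    assert (Hi : forall t, post NU t y = 0).
    { intros t. destruct (Nat.eq_0_gt_0_cases (post NU t y)) as [E|E]; auto.
      exfalso. apply Hn. exists t, y. split; auto. apply fl_le. exact E. }
    apply (proj2 (Hinit1 y)) in Hi. lia. }
  assert (Max : forall X l, (forall t, pastX NU X t -> In t l) -> (exists t, pastX NU X t) ->
     exists t, In t l /\ maxT NU X t).
  { intros X l Hl [t0 Ht0].
    destruct (maximal_in_list (fun a b => lt_node NU (inr a) (inr b)) (pastX NU X)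
       (fun a b c H1 H2 => t_trans _ _ _ _ _ H1 H2) (fun a => lt_irr NU Hwf (inr a)) l)
       as [m [Hm [Pm Hmx]]]; [exists t0; auto|].
    exists m. split; auto. split; auto. intros x Hx Hle.
    destruct (dec_t_inl _ _ _ Hle) as [p [Hp Hpx]].
    destruct (classic (p = x)) as [<-|Hne]; auto.
    destruct (dec_inl_inl _ _ _ Hpx Hne) as [t1 [Ht1 Hle1]].
    exfalso. apply (Hmx t1); [apply Hl; exists x; auto|exists x; auto|].
    apply flow_le_lt with (inl p); [exact Hp|apply fl_le; exact Ht1]. }
  induction n as [|n IH]; intros X l Hlen Hl Hpw.
  - destruct (classic (exists t, pastX NU X t)) as [He|Hn]; [|auto].
    destruct (Max X l Hl He) as [t [Ht _]]. destruct l; [destruct Ht|simpl in Hlen; lia].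
  - destruct (classic (exists t, pastX NU X t)) as [He|Hn]; [|auto].
    destruct (Max X l Hl He) as [t [Ht Hmax]].
    destruct HpnU as [_ [Hpre _]]. destruct (Hpre t) as [[lpre Hlpre] _].
    set (dec := fun a b : trans NU => excluded_middle_informative (a = b)).
    destruct (IH (Xn NU X t lpre) (remove dec t l)) as [M [HM Hc]].
    + pose proof (remove_length_lt dec l t Ht). lia.
    + intros t' Ht'. destruct (past_Xn NU Hwf X t lpre Hmax t' Ht') as [A B].
      apply in_in_remove; auto.
    + apply pw_Xn; auto.
    + destruct (step_lemma N NU lp ltr Hhom Hpre1 X t lpre Hlpre Hpw Hmax M Hc) as [He' Hc'].
      exists (fire N (ltr t) M). split; auto. constructor; auto.
Qed.

Theorem mainTheorem13 (N : PNet) (k : nat)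
  (HN : petri_net N) (Hfin : finite_net N) (Hk : 1 <= k) (Hbd : k_bounded k N)
  (NU : PNet) (lp : place NU -> place N) (lt : trans NU -> trans N)
  (Hbp : initial_branching_process N NU lp lt)
  (C : place NU -> Prop) (HC : cut NU C) :
  finite_set C.
Proof.
  destruct Hbp as [HpnU [Hocc [[Hhom Hinit] Hinj]]].
  destruct HC as [HpwC _].
  assert (Hs : forall s, finite_set (fun p => C p /\ lp p = s)).
  { intros s. apply (bounded_finite _ k). intros L HL HLQ.
    destruct (fin_union L (fun x t => le_node NU (inr t) (inl x))) as [l Hl].
    { intros x _. destruct Hocc as [_ [_ [Huniq [_ [Hwf _]]]]]. apply past_finite; auto. }
    destruct (main_ind N NU lp lt HpnU Hocc Hhom Hinit (length l) L l (le_n _) Hl) as [M [HM Hc]].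
    { intros x y Hx Hy Hne. apply HpwC; auto; [apply HLQ; auto|apply HLQ; auto]. }
    eapply Nat.le_trans; [apply (Hc s L HL)|apply Hbd; auto].
    intros y Hy. split; auto. apply HLQ; auto. }
  destruct Hfin as [[lpN HlpN] _].
  eapply fin_mono; [apply (fin_union lpN (fun s p => C p /\ lp p = s)); intros; apply Hs|].
  intros p Hp. exists (lp p). auto.
Qed.
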